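(* Let $b>1$, $p\ge1$, $R\subseteq\{0,\ldots,p-1\}$, $I\subseteq\mathbb{N}$ finite and non-empty, and let $k$ be the greatest divisor of $p$ coprime with $b$. Let $(s,t)$ and $(s',t')$ be two states of $\mathcal{C}_{R,p,I}$ with $s\equiv s'\pmod k$. If neither $(s,t)$ nor $(s',t')$ is the initial state, then $(s,t)$ and $(s',t')$ are ultimately-equivalent.
   Context: $A_b=\{0,\ldots,b-1\}$. $\mathcal{A}_{R,p}$: states $\{0,\ldots,p-1\}$, initial $0$, final $R$, transitions $n\xrightarrow{a}(nb+a)\bmod p$. With $m=\max I$, $\mathcal{B}_I$: states $\{0,\ldots,m\}\cup\{\bot\}$, initial $0$, final $I$, transitions $i\xrightarrow{a}ib+a$ if $ib+a\le m$, else $i\xrightarrow{a}\bot$, and $\bot\xrightarrow{a}\bot$. $\mathcal{C}_{R,p,I}$ is the accessible part (states reachable from the initial state $(0,0)$) of the product of $\mathcal{A}_{R,p}$ and $\mathcal{B}_I$, with componentwise transitions and $(s,t)$ final iff exactly one of $s\in R$, $t\in I$ holds. Two states $x,y$ are ultimately-equivalent if there is $m\ge1$ with $x\cdot u=y\cdot u$ for all words $u$ with $|u|\ge m$ ($x\cdot u$ = state reached from $x$ reading $u$). *)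

(* Defs.v *)
From mathcomp Require Import all_boot.
Set Implicit Arguments. Unset Strict Implicit. Unset Printing Implicit Defensive.

Definition is_word (b : nat) (u : seq nat) : bool := all (fun a => a < b) u.

Definition stepA (b p : nat) (n a : nat) : nat := (n * b + a) %% p.

(* B_I with m = max I; the sink state \bot is encoded as None. *)
Definition stepB (b m : nat) (t : option nat) (a : nat) : option nat :=
  match t with
  | Some i => if i * b + a <= m then Some (i * b + a) else None
  | None => None
  end.

Definition maxI (I : seq nat) : nat := \max_(i <- I) i.

Definition stateC := (nat * option nat)%type.

Definition initC : stateC := (0, Some 0).

Definition stepC (b p m : nat) (x : stateC) (a : nat) : stateC :=
  (stepA b p x.1 a, stepB b m x.2 a).

Definition runC (b p m : nat) (x : stateC) (u : seq nat) : stateC :=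
  foldl (stepC b p m) x u.

Definition finalC (R I : seq nat) (x : stateC) : bool :=
  (x.1 \in R) (+) (if x.2 is Some t then t \in I else false).

(* States of C_{R,p,I}: the accessible part of the product. *)
Definition accessibleC (b p : nat) (I : seq nat) (x : stateC) : Prop :=
  exists u, is_word b u /\ runC b p (maxI I) initC u = x.

Definition ult_equiv (b p : nat) (I : seq nat) (x y : stateC) : Prop :=
  exists n, 1 <= n /\
    forall u, is_word b u -> n <= size u ->
      runC b p (maxI I) x u = runC b p (maxI I) y u.

(* Main.v *)
Require Import Defs.
From mathcomp Require Import all_boot.
From mathcomp Require Import zify.

Lemma part_dvd b p k : 0 < p -> k %| p -> coprime k b ->
  (forall d, d %| p -> coprime d b -> d <= k) ->
  forall d, d %| p %/ k -> d %| b ^ d.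
Proof.
move=> p0 kp kb kmax.
have k0 : 0 < k by case: k kp {kb kmax} => //; rewrite dvd0n; move/eqP=> E; rewrite E in p0.
have q0 : 0 < p %/ k by rewrite divn_gt0 // dvdn_leq.
elim/ltn_ind => d IH dq.
have d0 : 0 < d by case: d {IH} dq => //; rewrite dvd0n => /eqP E; rewrite E in q0.
case: (eqVneq (gcdn d b) 1) => g1.
- have dkp : d * k %| p by rewrite -(divnK kp) dvdn_pmul2r.
  have cop : coprime (d * k) b by rewrite coprimeMl kb andbT /coprime g1.
  have := kmax _ dkp cop => le.
  have -> : d = 1 by nia.
  by rewrite dvd1n.
- set g := gcdn d b.
  have gd : g %| d by apply: dvdn_gcdl.
  have gb : g %| b by apply: dvdn_gcdr.
  have g0 : 0 < g by rewrite gcdn_gt0 d0.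
  have g1' : 1 < g by rewrite ltn_neqAle eq_sym g1 g0.
  have dE : d = d %/ g * g by rewrite divnK.
  have lt : d %/ g < d by rewrite ltn_Pdiv.
  have d'd : d %/ g %| d by rewrite {2}dE dvdn_mulr.
  have := IH _ lt (dvdn_trans d'd dq) => H.
  apply: (@dvdn_trans (b ^ (d %/ g).+1)); last by rewrite dvdn_exp2l.
  by rewrite {1}dE expnSr dvdn_mul.
Qed.

Lemma foldlB_None b m u : foldl (stepB b m) None u = None.
Proof. by elim: u. Qed.

Lemma foldlB_Some b m u t v : foldl (stepB b m) (Some t) u = Some v -> t * b ^ size u <= v.
Proof.
elim: u t => [|a u IH] t /=; first by case=> ->; rewrite muln1.
case: ifP => _; last by rewrite foldlB_None.
move/IH; rewrite expnS; nia.
Qed.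

Lemma runC_snd b p m x u : (runC b p m x u).2 = foldl (stepB b m) x.2 u.
Proof. by elim: u x => [|a u IH] x //=; rewrite /runC /= -IH. Qed.

Definition valw b (u : seq nat) := foldl (fun v a => v * b + a) 0 u.

Lemma runC_fst_mod b p m x u :
  (runC b p m x u).1 = x.1 * b ^ size u + valw b u %[mod p].
Proof.
elim/last_ind: u => [|u a IH].
  by rewrite /runC /= /valw /= muln1 addn0.
rewrite /runC foldl_rcons /= -/(runC _ _ _ _ _) /stepA /valw foldl_rcons -/(valw b u).
rewrite modn_mod -modnDml -modnMml IH modnMml modnDml size_rcons expnSr; congr (_ %% _); nia.
Qed.

Lemma runC_fst b p m x u : 0 < size u ->
  (runC b p m x u).1 = (x.1 * b ^ size u + valw b u) %% p.
Proof.
case/lastP: u => [//|u a] _.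
rewrite -(runC_fst_mod b p m) /runC foldl_rcons /= /stepA modn_mod //.
Qed.

Lemma init_only b p m u : 0 < p -> 0 < b -> (runC b p m initC u).2 = Some 0 -> runC b p m initC u = initC.
Proof.
move=> p0 b0; elim: u => [|a u IH] //=.
rewrite /runC /=.
case: a => [|a].
  rewrite /stepC /stepA /stepB /= mod0n.
  exact: IH.
rewrite -/(runC _ _ _ _ _) runC_snd /= /stepB /=.
case: ifP => _; last by rewrite foldlB_None.
move/foldlB_Some; rewrite leqn0 muln_eq0 expn_eq0 => /orP [//|/andP [b00 _]].
by rewrite (eqP b00) in b0.
Qed.

Lemma foldlB_eq b m u t v : foldl (stepB b m) (Some t) u = Some v -> v = t \/ v <= m.
Proof.
elim: u t => [|a u IH] t /=; first by case=> ->; left.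
case: ifP => H; last by rewrite foldlB_None.
by move/IH => [->|]; right.
Qed.

Lemma snd_none b m u o : 1 < b ->
  (o = None \/ exists t, o = Some t /\ 0 < t) -> m < size u ->
  foldl (stepB b m) o u = None.
Proof.
move=> b1 [->|[t [-> t0]]] su; first exact: foldlB_None.
case E: foldl => [v|] //.
have h1 := foldlB_Some _ _ _ _ _ E.
have h2 : size u < b ^ size u by rewrite ltn_expl.
case: (foldlB_eq _ _ _ _ _ E) => h3; nia.
Qed.

Lemma acc_snd b p I x : 0 < p -> 0 < b -> accessibleC b p I x -> x <> initC ->
  x.2 = None \/ exists t, x.2 = Some t /\ 0 < t.
Proof.
move=> p0 b0 [u [_ E]] ne.
case H: x.2 => [[|t]|]; [|by right; exists t.+1|by left].
by exfalso; apply: ne; rewrite -E; apply: init_only => //; rewrite E.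
Qed.

Theorem lemma42 (b p : nat) (R I : seq nat) (k : nat) (x y : stateC) :
  1 < b -> 1 <= p ->
  all (fun r => r < p) R ->
  I != [::] ->
  (* k is the greatest divisor of p coprime with b *)
  k %| p -> coprime k b ->
  (forall d, d %| p -> coprime d b -> d <= k) ->
  accessibleC b p I x -> accessibleC b p I y ->
  x.1 = y.1 %[mod k] ->
  x <> initC -> y <> initC ->
  ult_equiv b p I x y.
Proof.
move=> b1 p0 _ _ kp kb kmax ax ay exy nx ny.
have b0 : 0 < b by apply: ltnW.
have k0 : 0 < k by case: k kp {kb kmax exy} => //; rewrite dvd0n; move/eqP=> E; rewrite E in p0.
set m := maxI I; set q := p %/ k.
have qb := part_dvd b p k p0 kp kb kmax q (dvdnn q).
exists (m.+1 + q); split; first by rewrite addSn.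
move=> u _ su.
have hx := acc_snd b p I _ p0 b0 ax nx.
have hy := acc_snd b p I _ p0 b0 ay ny.
have su0 : 0 < size u by apply: leq_trans su; rewrite addSn.
rewrite [runC _ _ _ x u]surjective_pairing [runC _ _ _ y u]surjective_pairing.
rewrite !runC_snd !snd_none //; try by apply: leq_trans su; rewrite leq_addr.
rewrite !runC_fst //; congr (_, _).
have qn : q %| b ^ size u.
  apply: dvdn_trans qb _; rewrite dvdn_exp2l //; apply: leq_trans su; exact: leq_addl.
have pd : p %| k * b ^ size u.
  by rewrite -{1}(divnK kp) mulnC dvdn_pmul2l.
have key : x.1 * b ^ size u = y.1 * b ^ size u %[mod p].
  rewrite -(modn_dvdm _ pd) -(modn_dvdm (y.1 * b ^ size u) pd).
  by rewrite -!muln_modl exy.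
by rewrite -modnDml key modnDml.
Qed.
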